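(* Under the hypotheses of the sequential gradient descent setting (see context), for every $k\in\mathbb{N}$, $$J_{k+1}(x_{k+1})\le J_k(x_{k+1})\le J_k(x_k);$$ in particular the sequence $\{J_k(x_k)\}_k$ is nonincreasing.
   Context: $Q\in\mathbb{R}^{n\times n}$ symmetric positive semidefinite, $q\in\mathbb{R}^n$, $A\in\mathbb{R}^{n\times n}$ symmetric positive definite, $v\in\mathbb{R}^n$. $f(x)=\tfrac12 x^\top Qx+q^\top x$, $g(x)=(x-v)^\top A(x-v)$, $\mathcal{C}=\{x:g(x)\le1\}$, $\partial\mathcal{C}=\{x:g(x)=1\}$, $J_k(x)=f(x)+\frac{m}{k}g(x)^k$, $L_k=\bar\sigma(Q+m(4k-2)A)$, $r=\sqrt{\underline\sigma(A)}/\bar\sigma(A)$ ($\bar\sigma,\underline\sigma$ largest/smallest singular value). Setting: $m>0$ satisfies Requirement 2, namely with $w(x)=\nabla f(x)+m\nabla g(x)$, $\|w(x)\|^2\|\nabla g(x)\|\le 2rL_1\langle w(x),\nabla g(x)\rangle$ for all $x\in\partial\mathcal{C}$; $x_1\in\mathcal{C}$; $x_{k+1}=x_k-\gamma_k\nabla J_k(x_k)$ with $0<\gamma_k\le1/L_k$, $\sum_k\gamma_k^2<\infty$, $\sum_k\gamma_k=\infty$. *)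

(* Defs.v *)
From HB Require Import structures.
From mathcomp Require Import all_boot all_order all_algebra.
From mathcomp Require Import all_classical all_reals all_analysis.
Set Implicit Arguments. Unset Strict Implicit. Unset Printing Implicit Defensive.
Import Order.TTheory GRing.Theory Num.Theory.
Local Open Scope classical_set_scope.
Local Open Scope ring_scope.

Section Defs.
Variables (R : realType) (n : nat).

Definition dotv (u w : 'cV[R]_n) : R := \sum_(i < n) u i 0 * w i 0.
Definition norm2 (u : 'cV[R]_n) : R := Num.sqrt (dotv u u).

Definition qform (M : 'M[R]_n) (x : 'cV[R]_n) : R := (x^T *m M *m x) 0 0.

Definition symmetric (M : 'M[R]_n) : Prop := M^T = M.
Definition psd (M : 'M[R]_n) : Prop := symmetric M /\ forall x, 0 <= qform M x.
Definition pd (M : 'M[R]_n) : Prop := symmetric M /\ forall x, x != 0 -> 0 < qform M x.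

Definition sigma_max (M : 'M[R]_n) : R :=
  sup [set norm2 (M *m u) | u in [set u | norm2 u = 1]].
Definition sigma_min (M : 'M[R]_n) : R :=
  inf [set norm2 (M *m u) | u in [set u | norm2 u = 1]].

Definition grad (F : 'cV[R]_n -> R) (x : 'cV[R]_n) : 'cV[R]_n :=
  \col_i derive1 (fun t : R => F (x + t *: delta_mx i 0)) 0.

End Defs.

Section Problem.
Variables (R : realType) (n : nat).
Variables (Q A : 'M[R]_n) (q v : 'cV[R]_n) (m : R).

Definition fobj (x : 'cV[R]_n) : R := 1/2 * qform Q x + dotv q x.
Definition gcon (x : 'cV[R]_n) : R := qform A (x - v).
Definition Jk (k : nat) (x : 'cV[R]_n) : R := fobj x + m / k%:R * gcon x ^+ k.
Definition Lk (k : nat) : R := sigma_max (Q + (m * (4 * k%:R - 2)) *: A).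
Definition rA : R := Num.sqrt (sigma_min A) / sigma_max A.
Definition wfun (x : 'cV[R]_n) : 'cV[R]_n := grad fobj x + m *: grad gcon x.

Definition requirement2 : Prop :=
  forall x, gcon x = 1 ->
    norm2 (wfun x) ^+ 2 * norm2 (grad gcon x)
      <= 2 * rA * Lk 1 * dotv (wfun x) (grad gcon x).
End Problem.

(* Main.v *)
Require Import Defs.
From HB Require Import structures.
From mathcomp Require Import all_boot all_order all_algebra.
From mathcomp Require Import all_classical all_reals all_analysis.
From mathcomp Require Import ring lra.
Import Order.TTheory GRing.Theory Num.Theory.
Local Open Scope classical_set_scope.
Local Open Scope ring_scope.
Set Implicit Arguments. Unset Strict Implicit. Unset Printing Implicit Defensive.

Section LA.
Variables (R : realType) (n : nat).
Implicit Types (M N : 'M[R]_n) (x y z u w : 'cV[R]_n).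

Definition bil M x y : R := (x^T *m M *m y) 0 0.

Lemma qformE M x : qform M x = bil M x x. Proof. by []. Qed.

Lemma dotvE x y : dotv x y = bil 1 x y.
Proof. rewrite /bil mulmx1 /dotv !mxE; apply: eq_bigr => i _; by rewrite !mxE. Qed.

Lemma bilDl M x y z : bil M (x + y) z = bil M x z + bil M y z.
Proof. by rewrite /bil linearD /= !mulmxDl mxE. Qed.
Lemma bilDr M x y z : bil M z (x + y) = bil M z x + bil M z y.
Proof. by rewrite /bil !mulmxDr mxE. Qed.
Lemma bilZl M a x y : bil M (a *: x) y = a * bil M x y.
Proof. by rewrite /bil linearZ /= -!scalemxAl mxE. Qed.
Lemma bilZr M a x y : bil M x (a *: y) = a * bil M x y.
Proof. by rewrite /bil -!scalemxAr mxE. Qed.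
Lemma bilNl M x y : bil M (- x) y = - bil M x y.
Proof. by rewrite -scaleN1r bilZl mulN1r. Qed.
Lemma bilNr M x y : bil M x (- y) = - bil M x y.
Proof. by rewrite -scaleN1r bilZr mulN1r. Qed.
Lemma bilBl M x y z : bil M (x - y) z = bil M x z - bil M y z.
Proof. by rewrite bilDl bilNl. Qed.
Lemma bilBr M x y z : bil M z (x - y) = bil M z x - bil M z y.
Proof. by rewrite bilDr bilNr. Qed.
Lemma bilMD M N x y : bil (M + N) x y = bil M x y + bil N x y.
Proof. by rewrite /bil mulmxDr mulmxDl mxE. Qed.
Lemma bilMZ a M x y : bil (a *: M) x y = a * bil M x y.
Proof. by rewrite /bil -scalemxAr -scalemxAl mxE. Qed.
Lemma bil0l M y : bil M 0 y = 0.
Proof. by rewrite -(scale0r 0) bilZl mul0r. Qed.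

Lemma bil_sym M x y : Defs.symmetric M -> bil M x y = bil M y x.
Proof.
move=> sM; rewrite /bil.
have -> : (x^T *m M *m y) 0 0 = ((x^T *m M *m y)^T) 0 0 by rewrite [RHS]mxE.
by rewrite !trmx_mul trmxK sM mulmxA.
Qed.

Lemma bil_dot M x y : bil M x y = dotv x (M *m y).
Proof. by rewrite dotvE /bil mulmx1 mulmxA. Qed.

Lemma bil_dotl M x y : Defs.symmetric M -> bil M x y = dotv (M *m x) y.
Proof.
by move=> sM; rewrite dotvE /bil mulmx1 trmx_mul sM.
Qed.

Lemma sym1 : Defs.symmetric (1 : 'M[R]_n). Proof. exact: trmx1. Qed.

Lemma dotv_ge0 x : 0 <= dotv x x.
Proof. by apply: sumr_ge0 => i _; rewrite -expr2 sqr_ge0. Qed.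

Lemma dotv_sym x y : dotv x y = dotv y x.
Proof. by rewrite !dotvE bil_sym //; exact: sym1. Qed.

Lemma norm2_ge0 x : 0 <= norm2 x. Proof. exact: sqrtr_ge0. Qed.
Lemma norm2_sq x : norm2 x ^+ 2 = dotv x x.
Proof. by rewrite sqr_sqrtr // dotv_ge0. Qed.

Lemma discr_le (a b c : R) : 0 <= c ->
  (forall t, 0 <= a + 2 * t * b + t ^+ 2 * c) -> b ^+ 2 <= a * c.
Proof.
move=> c0 H.
have a0 : 0 <= a by have := H 0; rewrite mulr0 !mul0r expr0n /= mul0r !addr0.
have [ec|cn0] := eqVneq c 0.
  rewrite ec in H *.
  have [->|bn0] := eqVneq b 0; first by rewrite expr0n /= mulr0.
  have := H (- (a + 1) / (2 * b)).
  have -> : a + 2 * (- (a + 1) / (2 * b)) * b + (- (a + 1) / (2 * b)) ^+ 2 * 0 = -1.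
    by field.
  lra.
have cp : 0 < c by rewrite lt_neqAle eq_sym cn0.
have := H (- b / c).
have -> : a + 2 * (- b / c) * b + (- b / c) ^+ 2 * c = (a * c - b ^+ 2) / c.
  by field; rewrite cn0.
by rewrite pmulr_lge0 ?invr_gt0 // subr_ge0.
Qed.

Lemma csM M x y : Defs.symmetric M -> (forall z, 0 <= bil M z z) ->
  bil M x y ^+ 2 <= bil M x x * bil M y y.
Proof.
move=> sM pM; apply: discr_le => // t.
have := pM (x + t *: y).
rewrite !bilDl !bilDr !bilZl !bilZr (@bil_sym M y x sM).
suff -> : bil M x x + t * bil M x y + (t * bil M x y + t * (t * bil M y y))
 = bil M x x + 2 * t * bil M x y + t ^+ 2 * bil M y y by [].
by ring.
Qed.

Lemma csM' M x y : Defs.symmetric M -> (forall z, 0 <= bil M z z) ->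
  bil M x y <= Num.sqrt (bil M x x) * Num.sqrt (bil M y y).
Proof.
move=> sM pM; rewrite -sqrtrM ?pM //.
apply: (le_trans (ler_norm _)).
rewrite -sqrtr_sqr; apply: ler_wsqrtr; exact: csM.
Qed.

Lemma cs_dot x y : dotv x y <= norm2 x * norm2 y.
Proof.
rewrite /norm2 !dotvE; apply: csM'; first exact: sym1.
by move=> z; rewrite -dotvE dotv_ge0.
Qed.

End LA.

Section SIG.
Variables (R : realType) (n : nat).
Implicit Types (M N : 'M[R]_n) (x y z u w : 'cV[R]_n).

Lemma dotvZ a x : dotv (a *: x) (a *: x) = a ^+ 2 * dotv x x.
Proof. by rewrite !dotvE bilZl bilZr mulrA -expr2. Qed.

Lemma norm2Z a x : norm2 (a *: x) = `|a| * norm2 x.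
Proof. by rewrite /norm2 dotvZ sqrtrM ?sqr_ge0 // sqrtr_sqr. Qed.

Lemma norm20 : norm2 (0 : 'cV[R]_n) = 0.
Proof. by rewrite -(scale0r 0) norm2Z normr0 mul0r. Qed.

Lemma dotv_eq0 x : dotv x x = 0 -> x = 0.
Proof.
move=> /eqP; rewrite /dotv psumr_eq0 => [/allP H|i _]; last first.
  by rewrite -expr2 sqr_ge0.
apply/matrixP => i j; rewrite (ord1 j) !mxE.
have /H : i \in index_enum 'I_n by rewrite mem_index_enum.
by rewrite /= mulf_eq0 orbb => /eqP.
Qed.

Lemma norm2_gt0 x : x != 0 -> 0 < norm2 x.
Proof.
move=> xn0; rewrite lt_neqAle norm2_ge0 andbT eq_sym.
apply/negP => /eqP h; move/negP: xn0; apply; apply/eqP; apply: dotv_eq0.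
by rewrite -norm2_sq h expr0n.
Qed.

Lemma coord_le1 u i : norm2 u = 1 -> `|u i 0| <= 1.
Proof.
move=> nu; have : u i 0 ^+ 2 <= 1.
  rewrite -(expr1n R 2) -nu norm2_sq /dotv (bigD1 i) //= -expr2 lerDl.
  by apply: sumr_ge0 => j _; rewrite -expr2 sqr_ge0.
by move=> h; rewrite -sqrtr_sqr -sqrtr1; apply: ler_wsqrtr.
Qed.

Lemma bndS M : exists B, forall u, norm2 u = 1 -> norm2 (M *m u) <= B.
Proof.
pose K i := \sum_j `|M i j|.
exists (Num.sqrt (\sum_i K i ^+ 2)) => u nu.
apply: ler_wsqrtr; rewrite /dotv; apply: ler_sum => i _.
have K0 : 0 <= `|(M *m u) i 0| by [].
have Ki : `|(M *m u) i 0| <= K i.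
  rewrite mxE; apply: (le_trans (ler_norm_sum _ _ _)); apply: ler_sum => j _.
  by rewrite normrM ler_piMr // coord_le1.
rewrite -expr2 -real_normK ?num_real //; apply: lerXn2r => //.
  by rewrite nnegrE; apply: le_trans Ki.
Qed.

Lemma sigma_max_ub M u : norm2 (M *m u) <= sigma_max M * norm2 u.
Proof.
have [->|un0] := eqVneq u 0; first by rewrite mulmx0 norm20 mulr0.
have sp := norm2_gt0 un0.
pose u' := (norm2 u)^-1 *: u.
have nu' : norm2 u' = 1.
  by rewrite norm2Z ger0_norm ?invr_ge0 ?norm2_ge0 // mulVf // gt_eqF.
have : norm2 (M *m u') <= sigma_max M.
  apply: ub_le_sup; last by exists u'.
  by have [B HB] := bndS M; exists B => _ [w /= wn <-]; apply: HB.
rewrite -scalemxAr norm2Z ger0_norm ?invr_ge0 ?norm2_ge0 //.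
by rewrite ler_pdivrMl // mulrC.
Qed.

Lemma sigma_max_ge0 M : 0 <= sigma_max M.
Proof.
rewrite /sigma_max.
case: (pselect (exists u, norm2 u = 1)) => [[u nu]|nex].
  apply: le_trans (norm2_ge0 (M *m u)) _.
  apply: ub_le_sup; last by exists u.
  by have [B HB] := bndS M; exists B => _ [w /= wn <-]; apply: HB.
suff -> : [set norm2 (M *m u) | u in [set u | norm2 u = 1]] = set0 by rewrite sup0.
by apply/seteqP; split => // _ [u /= nu _]; apply: nex; exists u.
Qed.

Lemma sigma_max_le M l : 0 <= l -> (forall u, norm2 u = 1 -> norm2 (M *m u) <= l) ->
  sigma_max M <= l.
Proof.
move=> l0 H; rewrite /sigma_max.
case: (pselect (exists u, norm2 u = 1)) => [[u nu]|nex].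
  by apply: ge_sup; [exists (norm2 (M *m u)); exists u | move=> _ [w /= wn <-]; apply: H].
suff -> : [set norm2 (M *m u) | u in [set u | norm2 u = 1]] = set0 by rewrite sup0.
by apply/seteqP; split => // _ [u /= nu _]; apply: nex; exists u.
Qed.

Lemma sigma_min_ge0 M : 0 <= sigma_min M.
Proof.
rewrite /sigma_min.
case: (pselect (exists u, norm2 u = 1)) => [[u nu]|nex].
  apply: lb_le_inf; first by exists (norm2 (M *m u)); exists u.
  by move=> _ [w /= wn <-]; apply: norm2_ge0.
suff -> : [set norm2 (M *m u) | u in [set u | norm2 u = 1]] = set0 by rewrite inf0.
by apply/seteqP; split => // _ [u /= nu _]; apply: nex; exists u.
Qed.

Lemma sigma_min_lb M u : sigma_min M * norm2 u <= norm2 (M *m u).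
Proof.
have [->|un0] := eqVneq u 0; first by rewrite mulmx0 norm20 mulr0.
have sp := norm2_gt0 un0.
pose u' := (norm2 u)^-1 *: u.
have nu' : norm2 u' = 1.
  by rewrite norm2Z ger0_norm ?invr_ge0 ?norm2_ge0 // mulVf // gt_eqF.
have : sigma_min M <= norm2 (M *m u').
  apply: ge_inf; last by exists u'.
  by exists 0 => _ [w /= wn <-]; apply: norm2_ge0.
rewrite -scalemxAr norm2Z ger0_norm ?invr_ge0 ?norm2_ge0 //.
by rewrite ler_pdivlMl // mulrC.
Qed.

End SIG.

Section GRAD.
Variables (R : realType) (n : nat).
Implicit Types (M N : 'M[R]_n) (x y z u w : 'cV[R]_n).

Lemma derive1_poly (p : {poly R}) : derive1 (horner p) 0 = p^`().[0].
Proof. by rewrite derive1E; apply: derive_val. Qed.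

Definition ply (a b c : R) : {poly R} := a%:P + b *: 'X + c *: 'X^2.

Lemma plyE a b c t : (ply a b c).[t] = a + b * t + c * t ^+ 2.
Proof. by rewrite /ply !hornerE. Qed.

Lemma ply_d0 a b c : (ply a b c)^`().[0] = b.
Proof.
by rewrite /ply !derivD !derivZ derivC derivX derivXn /= !hornerE.
Qed.

Lemma ply_v0 a b c : (ply a b c).[0] = a.
Proof. by rewrite plyE mulr0 expr0n /= mulr0 !addr0. Qed.

Lemma dotv_delta w (i : 'I_n) : dotv w (delta_mx i 0) = w i 0.
Proof.
rewrite /dotv (bigD1 i) //= big1 ?addr0.
  by rewrite mxE !eqxx mulr1.
by move=> j ji; rewrite mxE (negPf ji) mulr0.
Qed.

Variables (Q A : 'M[R]_n) (q v : 'cV[R]_n) (m : R).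
Hypotheses (sQ : Defs.symmetric Q) (sA : Defs.symmetric A).

Lemma line_gcon x e t : gcon A v (x + t *: e) =
  (ply (gcon A v x) (2 * bil A (x - v) e) (bil A e e)).[t].
Proof.
rewrite plyE /gcon !qformE.
have -> : x + t *: e - v = (x - v) + t *: e by rewrite addrAC.
rewrite !bilDl !bilDr !bilZl !bilZr.
rewrite (@bil_sym _ _ A e x sA) (@bil_sym _ _ A e (- v) sA).
by ring.
Qed.

Lemma line_fobj x e t : fobj Q q (x + t *: e) =
  (ply (fobj Q q x) (bil Q x e + dotv q e) (1/2 * bil Q e e)).[t].
Proof.
rewrite plyE /fobj !qformE.
rewrite !bilDl !bilDr !bilZl !bilZr (@bil_sym _ _ Q e x sQ).
rewrite !dotvE bilDr bilZr.
by field.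
Qed.

Definition gJ (k : nat) x : 'cV[R]_n :=
  Q *m x + q + (m * gcon A v x ^+ k.-1 * 2) *: (A *m (x - v)).

Lemma grad_Jk k x : (1 <= k)%N -> grad (Jk Q A q v m k) x = gJ k x.
Proof.
move=> k1; apply/matrixP => i j; rewrite (ord1 j) [LHS]mxE.
set e := delta_mx i 0.
pose Pg := ply (gcon A v x) (2 * bil A (x - v) e) (bil A e e).
pose Pf := ply (fobj Q q x) (bil Q x e + dotv q e) (1/2 * bil Q e e).
have -> : (fun t => Jk Q A q v m k (x + t *: e)) = horner (Pf + (m / k%:R) *: Pg ^+ k).
  by apply/funext => t; rewrite /Jk line_fobj line_gcon !hornerE.
rewrite derive1_poly derivD derivZ deriv_exp !hornerE hornerMn hornerM horner_exp /Pf /Pg !ply_d0 ply_v0.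
rewrite (@bil_dotl _ _ Q x e sQ) !dotv_delta.
rewrite (@bil_dotl _ _ A (x - v) e sA) dotv_delta /gJ.
move: (Q *m x) (A *m (x - v)) => Qx Ax.
rewrite !mxE.
have kn0 : k%:R != 0 :> R by rewrite pnatr_eq0 -lt0n.
rewrite -mulr_natr.
by field.
Qed.

Lemma grad_fobj x : grad (fobj Q q) x = Q *m x + q.
Proof.
apply/matrixP => i j; rewrite (ord1 j) [LHS]mxE.
set e := delta_mx i 0.
pose Pf := ply (fobj Q q x) (bil Q x e + dotv q e) (1/2 * bil Q e e).
have -> : (fun t => fobj Q q (x + t *: e)) = horner Pf.
  by apply/funext => t; rewrite line_fobj.
rewrite derive1_poly ply_d0.
by rewrite (@bil_dotl _ _ Q x e sQ) !dotv_delta [RHS]mxE.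
Qed.

Lemma grad_gcon x : grad (gcon A v) x = 2 *: (A *m (x - v)).
Proof.
apply/matrixP => i j; rewrite (ord1 j) [LHS]mxE.
set e := delta_mx i 0.
pose Pg := ply (gcon A v x) (2 * bil A (x - v) e) (bil A e e).
have -> : (fun t => gcon A v (x + t *: e)) = horner Pg.
  by apply/funext => t; rewrite line_gcon.
rewrite derive1_poly ply_d0.
by rewrite (@bil_dotl _ _ A (x - v) e sA) dotv_delta [RHS]mxE.
Qed.

End GRAD.

Section SC.
Variable R : realType.
Implicit Types a b c s t u : R.

Lemma taylor_pow a u k : 0 <= a <= 1 -> 0 <= u <= 1 ->
  u ^+ k - a ^+ k - k%:R * a ^+ k.-1 * (u - a) <= (k * k.-1)%:R / 2 * (u - a) ^+ 2.
Proof.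
move=> /andP[a0 a1] /andP[u0 u1]; elim: k => [|k IH].
  by rewrite !expr0 mul0n /=; lra.
have ak : a ^+ k.-1 <= 1 by apply: exprn_ile1.
have ak0 : 0 <= a ^+ k.-1 by apply: exprn_ge0.
have E : u ^+ k.+1 - a ^+ k.+1 - k.+1%:R * a ^+ k * (u - a) =
   u * (u ^+ k - a ^+ k - k%:R * a ^+ k.-1 * (u - a)) + k%:R * a ^+ k.-1 * (u - a) ^+ 2.
  case: k {IH ak ak0} => [|k] /=; first by rewrite !expr0 !expr1; ring.
  rewrite !exprS /=; ring.
rewrite E.
set D := (u ^+ k - a ^+ k - k%:R * a ^+ k.-1 * (u - a)) in IH *.
have sq0 : 0 <= (u - a) ^+ 2 by apply: sqr_ge0.
have B0 : 0 <= (k * k.-1)%:R / 2 * (u - a) ^+ 2.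
  by apply: mulr_ge0 => //; apply: divr_ge0.
have H1 : u * D <= (k * k.-1)%:R / 2 * (u - a) ^+ 2.
  have [D0|D0] := lerP D 0.
    by apply: le_trans B0; rewrite mulr_ge0_le0.
  apply: le_trans IH; rewrite -[X in _ <= X]mul1r; apply: ler_wpM2r => //; exact: ltW.
have H2 : k%:R * a ^+ k.-1 * (u - a) ^+ 2 <= k%:R * (u - a) ^+ 2.
  by rewrite -mulrA ler_wpM2l // ler_piMl.
have -> : (k.+1 * k.+1.-1)%:R / 2 * (u - a) ^+ 2 =
   (k * k.-1)%:R / 2 * (u - a) ^+ 2 + k%:R * (u - a) ^+ 2.
  case: k {IH H1 H2 E D ak ak0 B0} => [|k] /=; first by rewrite !mul0n !mul0r add0r.
  by field.
by apply: lerD.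
Qed.

Lemma tri_sq t s b : 0 <= t <= 1 -> 0 <= s -> b <= 2 * t * s -> - (2 * t * s) <= b ->
  0 <= t ^+ 2 + b + s ^+ 2 <= 1 -> (b + s ^+ 2) ^+ 2 <= 4 * s ^+ 2.
Proof.
move=> /andP[t0 t1] s0 h1 h2 /andP[u0 u1].
have L : - (2 * s) <= b + s ^+ 2.
  have : 0 <= s * (1 - t) by apply: mulr_ge0 => //; lra.
  have : 0 <= s ^+ 2 by apply: sqr_ge0.
  nra.
have U : b + s ^+ 2 <= 2 * s.
  have [hs|hs] := lerP s (2 - 2 * t).
    have : s * s <= s * (2 - 2 * t) by apply: ler_wpM2l.
    rewrite expr2 in h1 *; nra.
  have : (1 - t) * (1 + t) <= (1 - t) * 2 by apply: ler_wpM2l; lra.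
  rewrite expr2 in u1 *; nra.
have : 0 <= (2 * s - (b + s ^+ 2)) * (2 * s + (b + s ^+ 2)) by apply: mulr_ge0; lra.
rewrite !expr2; nra.
Qed.

Lemma one_sub_pow t N : 0 <= t <= 1 -> 1 - t ^+ N <= N%:R * (1 - t).
Proof.
move=> /andP[t0 t1]; elim: N => [|N IH]; first by rewrite expr0 subrr mul0r.
have tN : t ^+ N <= 1 by apply: exprn_ile1.
have tN0 : 0 <= t ^+ N by apply: exprn_ge0.
have : t ^+ N * (1 - t) <= 1 - t by rewrite ler_piMl // subr_ge0.
rewrite exprSr -natr1; nra.
Qed.

Lemma zbound t D j : (1 <= j)%N -> 0 <= t <= 1 ->
  (2 * j%:R) * D <= t * (1 - t ^+ (2 * j)) -> t + D <= 1.
Proof.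
move=> j1 /andP[t0 t1] hD.
have h1 := @one_sub_pow t (2 * j) (introT andP (conj t0 t1)).
have tp : t ^+ (2 * j) <= 1 by apply: exprn_ile1.
have h2 : t * (1 - t ^+ (2 * j)) <= 1 - t ^+ (2 * j) by rewrite ler_piMl // subr_ge0.
have jp : 0 < j%:R :> R by rewrite ltr0n.
rewrite natrM in h1.
have : (2 * j%:R) * D <= (2 * j%:R) * (1 - t) by lra.
rewrite ler_pM2l; last by rewrite mulr_gt0.
lra.
Qed.

Lemma natr_kk1 k : (1 <= k)%N -> (k * k.-1)%:R = k%:R * (k%:R - 1) :> R.
Proof. by case: k => // k _; rewrite natrM /= -natr1 addrK mulrC. Qed.

Lemma pen_bound a b c k : (1 <= k)%N -> 0 <= a <= 1 -> 0 <= a + b + c <= 1 -> 0 <= c ->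
  (b + c) ^+ 2 <= 4 * c ->
  (a + b + c) ^+ k - a ^+ k <= k%:R * a ^+ k.-1 * b + k%:R * (2 * k%:R - 1) * c.
Proof.
move=> k1 ha hu c0 hbc.
have T := taylor_pow k ha hu.
rewrite (_ : a + b + c - a = b + c) in T; last by ring.
have ak : a ^+ k.-1 <= 1 by case/andP: ha => ??; apply: exprn_ile1.
have ak0 : 0 <= a ^+ k.-1 by case/andP: ha => ??; apply: exprn_ge0.
have kp : 0 <= k%:R :> R by [].
have H1 : (k * k.-1)%:R / 2 * (b + c) ^+ 2 <= (k * k.-1)%:R / 2 * (4 * c).
  by apply: ler_wpM2l => //; apply: divr_ge0.
have H2 : k%:R * a ^+ k.-1 * c <= k%:R * c.
  by rewrite -mulrA ler_wpM2l // ler_piMl.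
rewrite natr_kk1 // in H1, T.
move: T H1 H2; set K := k%:R; set P := a ^+ k.-1; move=> T H1 H2.
have E : K * (2 * K - 1) * c = K * (K - 1) / 2 * (4 * c) + K * c by field.
rewrite E.
have : K * P * (b + c) = K * P * b + K * P * c by ring.
lra.
Qed.

End SC.

Section MAIN.
Variables (R : realType) (n : nat).
Variables (Q A : 'M[R]_n) (q v : 'cV[R]_n) (m : R).
Hypotheses (pQ : psd Q) (pA : pd A) (m0 : 0 < m).
Implicit Types (M N : 'M[R]_n) (x y z u w : 'cV[R]_n).

Let sQ : Defs.symmetric Q := pQ.1.
Let sA : Defs.symmetric A := pA.1.

Lemma A_ge0 z : 0 <= bil A z z.
Proof.
have [->|zn0] := eqVneq z 0; first by rewrite bil0l.
by apply: ltW; rewrite -qformE; apply: pA.2.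
Qed.

Lemma A_eq0 z : bil A z z = 0 -> z = 0.
Proof.
move=> h; apply/eqP; apply/negP => zn0.
by have := pA.2 z (introN idP zn0); rewrite qformE h ltxx.
Qed.

Lemma Q_ge0 z : 0 <= bil Q z z.
Proof. by rewrite -qformE; apply: pQ.2. Qed.

Definition Mc c := Q + c *: A.

Lemma Mc_sym c : Defs.symmetric (Mc c).
Proof. by rewrite /Defs.symmetric /Mc linearD /= linearZ /= sQ sA. Qed.

Lemma Mc_bil c z : bil (Mc c) z z = bil Q z z + c * bil A z z.
Proof. by rewrite /Mc bilMD bilMZ. Qed.

Lemma Mc_ge0 c z : 0 <= c -> 0 <= bil (Mc c) z z.
Proof. by move=> c0; rewrite Mc_bil addr_ge0 ?Q_ge0 ?mulr_ge0 ?A_ge0. Qed.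

Lemma LkE k : Lk Q A m k = sigma_max (Mc (m * (4 * k%:R - 2))).
Proof. by []. Qed.

Lemma quad_le_sigma M z : bil M z z <= sigma_max M * dotv z z.
Proof.
rewrite bil_dot; apply: le_trans (cs_dot _ _) _.
apply: le_trans (ler_wpM2l (norm2_ge0 z) (sigma_max_ub M z)) _.
by rewrite -norm2_sq expr2 mulrCA.
Qed.

Lemma ck_ge0 k : (1 <= k)%N -> 0 <= m * (4 * k%:R - 2).
Proof.
move=> k1; apply: mulr_ge0; first exact: ltW.
have : 1 <= k%:R :> R by rewrite ler1n.
lra.
Qed.

Lemma gL_le1 k g : 0 < g -> g <= 1 / Lk Q A m k -> g * Lk Q A m k <= 1.
Proof.
move=> g0 gL.
have L0 : 0 <= Lk Q A m k by apply: sigma_max_ge0.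
have [L00|Lp] := eqVneq (Lk Q A m k) 0.
  by move: gL; rewrite L00 invr0 mulr0 => /(lt_le_trans g0); rewrite ltxx.
have Lpos : 0 < Lk Q A m k by rewrite lt_neqAle eq_sym Lp L0.
by rewrite -ler_pdivlMr // mul1r -[X in _ <= X]div1r.
Qed.

Lemma gamma_ok k g z : 0 < g -> g <= 1 / Lk Q A m k ->
  g * bil (Mc (m * (4 * k%:R - 2))) z z <= dotv z z.
Proof.
move=> g0 gL; have h := gL_le1 g0 gL.
apply: (le_trans (ler_wpM2l (ltW g0) (quad_le_sigma _ _))).
rewrite -LkE mulrA -[X in _ <= X]mul1r; apply: ler_wpM2r => //; exact: dotv_ge0.
Qed.

Lemma L1_le k : (1 <= k)%N -> Lk Q A m 1 <= Lk Q A m k.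
Proof.
move=> k1; set l := Lk Q A m k.
have l0 : 0 <= l by apply: sigma_max_ge0.
rewrite LkE; apply: sigma_max_le => // u nu.
set P := Mc _.
have c1 := ck_ge0 (leqnn 1).
have hP : forall y, bil P y y <= l * dotv y y.
  move=> y; apply: (le_trans _ (quad_le_sigma (Mc (m * (4 * k%:R - 2))) y)).
  rewrite /P !Mc_bil lerD2l; apply: ler_wpM2r; first exact: A_ge0.
  apply: ler_wpM2l; first exact: ltW.
  have : 1 <= k%:R :> R by rewrite ler1n.
  lra.
have sP : Defs.symmetric P by apply: Mc_sym.
have pP : forall z, 0 <= bil P z z by move=> z; apply: Mc_ge0.
set w := P *m u.
have du : dotv u u = 1 by rewrite -norm2_sq nu expr1n.
have h1 : dotv w w <= Num.sqrt (bil P u u) * Num.sqrt (bil P w w).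
  by rewrite -(@bil_dotl _ _ P u w sP); apply: csM'.
have h2 : Num.sqrt (bil P u u) * Num.sqrt (bil P w w) <= l * norm2 w.
  have -> : l * norm2 w = Num.sqrt (l ^+ 2 * dotv w w).
    by rewrite sqrtrM ?sqr_ge0 // sqrtr_sqr ger0_norm.
  rewrite -sqrtrM; last exact: pP.
  apply: ler_wsqrtr; have := hP u; have := hP w; rewrite du mulr1 => hw hu.
  rewrite expr2 -mulrA; apply: ler_pM => //. all: try exact: pP.
have : norm2 w ^+ 2 <= l * norm2 w by rewrite norm2_sq; apply: le_trans h2.
have nw0 := norm2_ge0 w.
have [->|wp] := eqVneq (norm2 w) 0; first by [].
have wpos : 0 < norm2 w by rewrite lt_neqAle eq_sym wp nw0.
by rewrite expr2 ler_pM2r.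
Qed.

Lemma dotvDl x y z : dotv (x + y) z = dotv x z + dotv y z.
Proof. by rewrite !dotvE bilDl. Qed.
Lemma dotvZl a x z : dotv (a *: x) z = a * dotv x z.
Proof. by rewrite !dotvE bilZl. Qed.
Lemma dotvZr a x z : dotv z (a *: x) = a * dotv z x.
Proof. by rewrite !dotvE bilZr. Qed.
Lemma dotv0l z : dotv 0 z = 0.
Proof. by rewrite dotvE bil0l. Qed.

Lemma sqrt_le1 (a : R) : a <= 1 -> Num.sqrt a <= 1.
Proof. by move=> h; rewrite -sqrtr1; apply: ler_wsqrtr. Qed.

Lemma bdry g e : requirement2 Q A q v m -> 0 <= g -> g * Lk Q A m 1 <= 1 ->
  bil A e e = 1 ->
  bil A (e - g *: (Q *m (v + e) + q + (2 * m) *: (A *m e)))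
        (e - g *: (Q *m (v + e) + q + (2 * m) *: (A *m e))) <= 1.
Proof.
move=> req g0 gL ee.
set w := Q *m (v + e) + q + (2 * m) *: (A *m e).
have ve : v + e - v = e by rewrite addrAC subrr add0r.
have ge : gcon A v (v + e) = 1 by rewrite /gcon qformE ve.
have H := req _ ge.
have wE : wfun Q A q v m (v + e) = w.
  by rewrite /wfun grad_fobj // grad_gcon // ve scalerA mulrC.
have gE : grad (gcon A v) (v + e) = 2 *: (A *m e) by rewrite grad_gcon // ve.
rewrite wE gE in H.
set D := dotv w (2 *: (A *m e)) in H.
have DE : D = 2 * bil A e w by rewrite /D dotvZr (@bil_dotl _ _ A e w sA) dotv_sym.
suff key : g * bil A w w <= D.
  rewrite bilBl !bilBr !bilZl !bilZr ee (@bil_sym _ _ A w e sA).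
  have : g * (g * bil A w w) <= g * D by apply: ler_wpM2l.
  rewrite DE; lra.
have qw := quad_le_sigma A w.
have [w0|wn0] := eqVneq w 0.
  by rewrite /D w0 bil0l dotv0l mulr0.
have nw : 0 < dotv w w by rewrite -norm2_sq exprn_gt0 // norm2_gt0.
have Aen0 : A *m e != 0.
  apply/eqP => Ae0; move: ee; rewrite bil_dot Ae0 -(scale0r 0) dotvZr mul0r.
  by move/eqP; rewrite eq_sym oner_eq0.
have nAe : 0 < norm2 (A *m e) by apply: norm2_gt0.
have sm0 := sigma_min_ge0 A.
have sA0 : 0 <= sigma_max A by apply: sigma_max_ge0.
have L10 : 0 <= Lk Q A m 1 by apply: sigma_max_ge0.
have r0 : 0 <= rA A by apply: divr_ge0 => //; apply: sqrtr_ge0.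
have N2 : norm2 (2 *: (A *m e)) = 2 * norm2 (A *m e) by rewrite norm2Z ger0_norm.
rewrite N2 norm2_sq in H.
have lhs0 : 0 < dotv w w * (2 * norm2 (A *m e)) by rewrite mulr_gt0 // mulr_gt0.
have rhs0 : 0 < 2 * rA A * Lk Q A m 1 * D by apply: lt_le_trans H.
have X0 : 0 <= 2 * rA A * Lk Q A m 1 by apply: mulr_ge0 => //; apply: mulr_ge0.
have Dp : 0 < D.
  rewrite ltNge; apply/negP => hD; have := mulr_ge0_le0 X0 hD; lra.
have rp : 0 < rA A.
  rewrite lt_neqAle r0 andbT eq_sym; apply/eqP => r00.
  by move: rhs0; rewrite r00 mulr0 !mul0r ltxx.
have sAp : 0 < sigma_max A.
  rewrite lt_neqAle sA0 andbT eq_sym; apply/eqP => s00.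
  by move: rp; rewrite /rA s00 invr0 mulr0 ltxx.
set sm := Num.sqrt (sigma_min A) in rp *.
set S := sigma_max A in sAp rp *.
have smE : sm = rA A * S by rewrite /rA divfK // gt_eqF.
have smp : 0 < sm by rewrite smE mulr_gt0.
have Ae_ge : sm <= norm2 (A *m e).
  have h1 := sigma_min_lb A e.
  have h2 : 1 <= norm2 e * norm2 (A *m e) by rewrite -ee bil_dot; apply: cs_dot.
  have h3 := ler_wpM2l sm0 h2.
  have h4 := ler_wpM2r (ltW nAe) h1.
  have h5 : sigma_min A <= norm2 (A *m e) ^+ 2.
    rewrite expr2; apply: le_trans h4; rewrite -mulrA; apply: le_trans h3; rewrite mulr1.
    exact: lexx.
  by rewrite /sm -(ger0_norm (ltW nAe)) -sqrtr_sqr; apply: ler_wsqrtr.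
have H' : dotv w w * (2 * sm) <= 2 * rA A * Lk Q A m 1 * D.
  apply: le_trans H; apply: ler_wpM2l; first by apply: ltW.
  by apply: ler_wpM2l.
have key2 : S * dotv w w <= Lk Q A m 1 * D.
  have : 2 * sm * (S * dotv w w) <= 2 * sm * (Lk Q A m 1 * D).
    have -> : 2 * sm * (Lk Q A m 1 * D) = S * (2 * rA A * Lk Q A m 1 * D).
      by rewrite smE; ring.
    have -> : 2 * sm * (S * dotv w w) = S * (dotv w w * (2 * sm)) by ring.
    by apply: ler_wpM2l => //; apply: ltW.
  by rewrite ler_pM2l // mulr_gt0.
have : g * bil A w w <= g * (S * dotv w w) by apply: ler_wpM2l.
have : g * (S * dotv w w) <= g * (Lk Q A m 1 * D) by apply: ler_wpM2l.
have : g * Lk Q A m 1 * D <= D.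
  by rewrite -[X in _ <= X]mul1r; apply: ler_wpM2r => //; apply: ltW.
rewrite mulrA; lra.
Qed.

Lemma convA a b al : 0 <= al <= 1 -> bil A a a <= 1 -> bil A b b <= 1 ->
  bil A (al *: a + (1 - al) *: b) (al *: a + (1 - al) *: b) <= 1.
Proof.
move=> /andP[al0 al1] ha hb.
have hab := A_ge0 (a - b).
rewrite !bilBl !bilBr (@bil_sym _ _ A b a sA) in hab.
rewrite !bilDl !bilDr !bilZl !bilZr (@bil_sym _ _ A b a sA).
have : 0 <= al * (1 - al) by apply: mulr_ge0; lra.
have : al * (1 - al) * (bil A a a - bil A a b - (bil A a b - bil A b b)) >= 0.
  by apply: mulr_ge0 => //; apply: mulr_ge0; lra.
nra.
Qed.

Lemma allzero : ~ (exists e, bil A e e = 1) -> forall u, u = 0.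
Proof.
move=> nex u; apply/eqP; apply/negP => /negP un0.
apply: nex.
have up : 0 < bil A u u.
  by rewrite lt_neqAle A_ge0 andbT eq_sym; apply/eqP => /A_eq0 /eqP; apply/negP.
exists ((Num.sqrt (bil A u u))^-1 *: u).
rewrite bilZl bilZr mulrA -expr2 exprVn sqr_sqrtr ?A_ge0 //.
by rewrite mulVf // gt_eqF.
Qed.

Definition T1 g z := z - g *: (Q *m (v + z) + q + (2 * m) *: (A *m z)).

Lemma T1_affine g rho e : T1 g (rho *: e) =
  ((1 + rho) / 2) *: T1 g e + (1 - (1 + rho) / 2) *: T1 g (- e).
Proof.
rewrite /T1 !mulmxDr !mulmxN -!scalemxAr.
move: (Q *m v) (Q *m e) (A *m e) => a1 a2 a3.
apply/matrixP => i j; rewrite !mxE.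
by field.
Qed.

Lemma T1_C g z : requirement2 Q A q v m -> 0 <= g -> g * Lk Q A m 1 <= 1 ->
  bil A z z <= 1 -> bil A (T1 g z) (T1 g z) <= 1.
Proof.
move=> req g0 gL hz.
case: (pselect (exists e, bil A e e = 1)) => [[e0 he0]|nex]; last first.
  by rewrite (allzero nex (T1 g z)) bil0l.
have [rho [e [-> he rho1]]] : exists rho e, [/\ z = rho *: e, bil A e e = 1 & `|rho| <= 1].
  have [z0|zn0] := eqVneq z 0.
    by exists 0, e0; rewrite z0 scale0r normr0.
  have zp : 0 < bil A z z.
    by rewrite lt_neqAle A_ge0 andbT eq_sym; apply/eqP => /A_eq0 /eqP; apply/negP.
  have sp : 0 < Num.sqrt (bil A z z) by rewrite sqrtr_gt0.
  exists (Num.sqrt (bil A z z)), ((Num.sqrt (bil A z z))^-1 *: z); split.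
  - by rewrite scalerA divff ?scale1r // gt_eqF.
  - rewrite bilZl bilZr mulrA -expr2 exprVn sqr_sqrtr ?A_ge0 //.
    by rewrite mulVf // gt_eqF.
  - by rewrite ger0_norm ?sqrtr_ge0 // sqrt_le1.
rewrite T1_affine; apply: convA.
- by move: rho1; rewrite ler_norml => /andP [h1 h2]; apply/andP; split; lra.
- exact: bdry.
- have hm : bil A (- e) (- e) = 1 by rewrite bilNl bilNr opprK.
  have := bdry req g0 gL hm.
  by rewrite /T1.
Qed.

Lemma gcon_bil x : gcon A v x = bil A (x - v) (x - v).
Proof. by []. Qed.

Lemma feas k g x : requirement2 Q A q v m -> (1 <= k)%N -> 0 < g -> g <= 1 / Lk Q A m k ->
  gcon A v x <= 1 -> gcon A v (x - g *: gJ Q A q v m k x) <= 1.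
Proof.
move=> req k1 g0 gLk hx.
have gL1 : g * Lk Q A m 1 <= 1.
  apply: le_trans (gL_le1 g0 gLk); apply: ler_wpM2l; [exact: ltW | exact: L1_le].
set d := x - v.
have xE : x = v + d by rewrite /d addrC subrK.
set s := bil A d d.
have s0 : 0 <= s by apply: A_ge0.
have s1 : s <= 1 by [].
set mu := s ^+ k.-1.
have mu1 : mu <= 1 by apply: exprn_ile1.
have mu0 : 0 <= mu by apply: exprn_ge0.
suff [z [hz1 hzE]] : exists z, bil A z z <= 1 /\ T1 g z = x - g *: gJ Q A q v m k x - v.
  by rewrite gcon_bil -hzE; apply: T1_C => //; apply: ltW.
set B := 1%:M - g *: (Q + (2 * m) *: A).
have TB : forall z0, T1 g z0 = B *m z0 - g *: (Q *m v + q).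
  move=> z0; rewrite /T1 /B mulmxBl mul1mx -scalemxAl mulmxDl -scalemxAl !mulmxDr.
  move: (Q *m v) (Q *m z0) (A *m z0) => a1 a2 a3.
  by apply/matrixP => i j; rewrite !mxE; ring.
have yE : x - g *: gJ Q A q v m k x - v =
    B *m d + (2 * g * m * (1 - mu)) *: (A *m d) - g *: (Q *m v + q).
  rewrite /gJ -/d -/s -/mu /B mulmxBl mul1mx -scalemxAl mulmxDl -scalemxAl.
  rewrite [in LHS]xE mulmxDr.
  move: (Q *m v) (Q *m d) (A *m d) => a1 a2 a3.
  by apply/matrixP => i j; rewrite !mxE; ring.
have [k1e|kn1] := eqVneq k 1%N.
  exists d; split => //.
  by rewrite TB yE /mu k1e expr0 subrr mulr0 scale0r addr0.
have k2 : (1 < k)%N by rewrite ltn_neqAle eq_sym kn1 k1.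
set cc := g * (m * (4 * k%:R - 2) - 2 * m).
have kR : 2 <= k%:R :> R by rewrite ler_nat.
have ccp : 0 < cc.
  apply: mulr_gt0 => //.
  have h : 0 < m * (4 * k%:R - 4) by apply: mulr_gt0 => //; lra.
  lra.
have bilMN : forall (M : 'M[R]_n) a b, bil (- M) a b = - bil M a b.
  by move=> M a b; rewrite -scaleN1r bilMZ mulN1r.
have Bge : forall u, cc * bil A u u <= bil B u u.
  move=> u; have h := gamma_ok u g0 gLk; rewrite Mc_bil in h.
  rewrite /B bilMD bilMN bilMZ bilMD bilMZ -dotvE /cc.
  have := A_ge0 u; have := Q_ge0 u; nra.
have Bsym : Defs.symmetric B.
  have eQ : forall i j, Q j i = Q i j.
    by move=> i j; have := congr1 (fun M : 'M[R]_n => M i j) sQ; rewrite mxE.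
  have eA : forall i j, A j i = A i j.
    by move=> i j; have := congr1 (fun M : 'M[R]_n => M i j) sA; rewrite mxE.
  by apply/matrixP => i j; rewrite /B !mxE eQ eA (eq_sym j i).
have Bunit : B \in unitmx.
  rewrite -row_free_unit; apply: inj_row_free => r rB.
  have Br : B *m r^T = 0 by rewrite -{1}Bsym -trmx_mul rB trmx0.
  have := Bge r^T; rewrite (bil_dot B) Br -(scale0r 0) dotvZr mul0r.
  rewrite pmulr_rle0 // => hr.
  have : bil A r^T r^T = 0 by apply/eqP; rewrite eq_le hr A_ge0.
  by move/A_eq0 => /(congr1 trmx); rewrite trmxK trmx0.
set beta := 2 * g * m * (1 - mu).
set dl := invmx B *m (beta *: (A *m d)).
have Bdl : B *m dl = beta *: (A *m d) by rewrite /dl mulKVmx.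
exists (d + dl); split; last first.
  by rewrite TB yE mulmxDr Bdl.
set D := Num.sqrt (bil A dl dl).
set t := Num.sqrt s.
have t0 : 0 <= t by apply: sqrtr_ge0.
have t1 : t <= 1 by apply: sqrt_le1.
have tt : t ^+ 2 = s by rewrite sqr_sqrtr.
have D0 : 0 <= D by apply: sqrtr_ge0.
have DD : D ^+ 2 = bil A dl dl by rewrite sqr_sqrtr // A_ge0.
have hd : bil A d dl <= t * D by apply: csM' => //; apply: A_ge0.
have hdl : bil A dl d <= D * t by apply: csM' => //; apply: A_ge0.
have beta0 : 0 <= beta.
  by apply: mulr_ge0; [apply: mulr_ge0; [apply: mulr_ge0 => //; apply: ltW | apply: ltW] | lra].
have cD : cc * D <= beta * t.
  have h1 : cc * D ^+ 2 <= beta * (D * t).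
    rewrite DD; apply: le_trans (Bge dl) _.
    rewrite (bil_dot B) Bdl dotvZr -bil_dot.
    by apply: ler_wpM2l.
  have [D00|Dn0] := eqVneq D 0.
    by rewrite D00 mulr0; apply: mulr_ge0.
  have Dp : 0 < D by rewrite lt_neqAle eq_sym Dn0 D0.
  rewrite -(ler_pM2r Dp); move: h1; rewrite expr2; lra.
set j := k.-1.
have kj : k = j.+1 by rewrite /j prednK // ltnW.
have j1 : (1 <= j)%N by rewrite /j -ltnS prednK // ltnW.
have muE : mu = t ^+ (2 * j) by rewrite /mu -/j exprM tt.
have hz : t + D <= 1.
  apply: (@zbound R t D j j1); first by rewrite t0 t1.
  have gm : 0 < 2 * g * m by rewrite mulr_gt0 // mulr_gt0.
  rewrite -(ler_pM2l gm) -muE.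
  have e1 : (j.+1)%:R = j%:R + 1 :> R by rewrite -natr1.
  move: cD; rewrite /cc /beta kj e1; lra.
rewrite (bilDl A d dl) (bilDr A d dl d) (bilDr A d dl dl) (@bil_sym _ _ A dl d sA) -/s -tt -DD.
have : (t + D) ^+ 2 <= 1.
  by rewrite expr_le1 // addr_ge0.
rewrite expr2; nra.
Qed.

Lemma desc k g x : (1 <= k)%N -> 0 < g -> g <= 1 / Lk Q A m k ->
  gcon A v x <= 1 -> gcon A v (x - g *: gJ Q A q v m k x) <= 1 ->
  Jk Q A q v m k (x - g *: gJ Q A q v m k x) <= Jk Q A q v m k x.
Proof.
move=> k1 g0 gLk hx hy.
set p := gJ Q A q v m k x.
set h := (- g) *: p.
have yE : x - g *: p = x + 1 *: h by rewrite scale1r /h scaleNr.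
set d := x - v.
set a := gcon A v x.
set b := 2 * bil A d h.
set c := bil A h h.
have a0 : 0 <= a by apply: A_ge0.
have c0 : 0 <= c by apply: A_ge0.
have uE : gcon A v (x - g *: p) = a + b + c.
  by rewrite yE (line_gcon v sA) plyE mulr1 expr1n mulr1.
have u0 : 0 <= a + b + c by rewrite -uE; apply: A_ge0.
rewrite uE in hy.
have hbc : (b + c) ^+ 2 <= 4 * c.
  have ta : Num.sqrt a ^+ 2 = a by rewrite sqr_sqrtr.
  have tc : Num.sqrt c ^+ 2 = c by rewrite sqr_sqrtr.
  have := @tri_sq R (Num.sqrt a) (Num.sqrt c) b.
  rewrite ta tc; apply.
  - by rewrite sqrtr_ge0 sqrt_le1.
  - exact: sqrtr_ge0.
  - rewrite /b -mulrA ler_pM2l //; apply: csM' => //; exact: A_ge0.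
  - have := @csM' R n A d (- h) sA A_ge0.
    rewrite bilNr bilNl bilNr opprK -/c -/a /b => hh.
    rewrite -mulrA -mulrN ler_pM2l //; lra.
  - by rewrite u0 hy.
have pb := pen_bound k1 (introT andP (conj a0 hx)) (introT andP (conj u0 hy)) c0 hbc.
set mu := a ^+ k.-1 in pb.
have kp : 0 < k%:R :> R by rewrite ltr0n.
have mk0 : 0 <= m / k%:R by apply: divr_ge0 => //; apply: ltW.
have pb' : m / k%:R * ((a + b + c) ^+ k - a ^+ k) <= m * mu * b + m * (2 * k%:R - 1) * c.
  apply: le_trans (ler_wpM2l mk0 pb) _.
  have -> : m / k%:R * (k%:R * mu * b + k%:R * (2 * k%:R - 1) * c) =
    m * mu * b + m * (2 * k%:R - 1) * c by field; rewrite gt_eqF.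
  exact: lexx.
have dp : dotv p h = bil Q x h + dotv q h + (m * mu * 2) * bil A d h.
  rewrite /p /gJ !dotvDl dotvZl -(@bil_dotl _ _ Q x h sQ) -(@bil_dotl _ _ A d h sA).
  by rewrite -/d -/a.
have dp2 : dotv p h = - g * dotv p p by rewrite /h dotvZr.
set Mk := Mc (m * (4 * k%:R - 2)).
have bk : bil Q h h + m * (4 * k%:R - 2) * c = g ^+ 2 * bil Mk p p.
  by rewrite /Mk Mc_bil /c /h !bilZl !bilZr; ring.
have gk : g * bil Mk p p <= dotv p p by apply: gamma_ok.
have gk2 : g * (g * bil Mk p p) <= g * dotv p p by apply: ler_wpM2l => //; apply: ltW.
have P0 : 0 <= g * dotv p p by apply: mulr_ge0; [apply: ltW | apply: dotv_ge0].
rewrite yE /Jk (line_fobj q sQ) plyE mulr1 expr1n mulr1.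
rewrite -yE uE -/a.
rewrite /b in pb'; move: pb' dp dp2 bk gk2 P0.
set X := bil A d h. set Y := dotv p p. set Z := bil Mk p p.
move=> pb' dp dp2 bk gk2 P0.
nra.
Qed.

Lemma mono k x : (1 <= k)%N -> gcon A v x <= 1 ->
  Jk Q A q v m k.+1 x <= Jk Q A q v m k x.
Proof.
move=> k1 hx; rewrite /Jk lerD2l.
set a := gcon A v x.
have a0 : 0 <= a by apply: A_ge0.
have kp : 0 < k%:R :> R by rewrite ltr0n.
have ak0 : 0 <= a ^+ k by apply: exprn_ge0.
have h1 : a ^+ k.+1 <= a ^+ k by rewrite exprSr ler_piMr.
have h2 : (k.+1%:R)^-1 <= k%:R^-1 :> R.
  by rewrite lef_pV2 ?posrE ?ltr0n // ler_nat.
apply: ler_pM => //.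
- by apply: divr_ge0 => //; apply: ltW.
- by apply: exprn_ge0.
- by apply: ler_wpM2l => //; apply: ltW.
Qed.

End MAIN.

Unset Implicit Arguments. Set Strict Implicit.

Theorem lemma4 (R : realType) (n : nat) (Q A : 'M[R]_n) (q v : 'cV[R]_n) (m : R)
  (x : nat -> 'cV[R]_n) (gamma : nat -> R) :
  psd Q -> pd A -> 0 < m -> requirement2 Q A q v m ->
  gcon A v (x 1%N) <= 1 ->
  (forall k, (1 <= k)%N -> x k.+1 = x k - gamma k *: grad (Jk Q A q v m k) (x k)) ->
  (forall k, (1 <= k)%N -> 0 < gamma k /\ gamma k <= 1 / Lk Q A m k) ->
  cvgn (fun N => \sum_(1 <= k < N) gamma k ^+ 2) ->
  (fun N => \sum_(1 <= k < N) gamma k) @ \oo --> +oo ->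
  forall k, (1 <= k)%N ->
    [/\ Jk Q A q v m k.+1 (x k.+1) <= Jk Q A q v m k (x k.+1),
        Jk Q A q v m k (x k.+1) <= Jk Q A q v m k (x k)
      & Jk Q A q v m k.+1 (x k.+1) <= Jk Q A q v m k (x k)].
Proof.
move=> pQ pA m0 req hx1 hstep hgam _ _ k k1.
have sQ := pQ.1; have sA := pA.1.
have step : forall j, (1 <= j)%N -> x j.+1 = x j - gamma j *: gJ Q A q v m j (x j).
  by move=> j j1; rewrite hstep // grad_Jk.
have C : forall j, (1 <= j)%N -> gcon A v (x j) <= 1.
  elim => [//|j IH] _.
  case: j IH => [_|j IH]; first exact: hx1.
  have [g0 gL] := hgam j.+1 isT.
  by rewrite step //; apply: (feas pQ pA m0 req) => //; apply: IH.
have [g0 gL] := hgam k k1.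
have h1 : Jk Q A q v m k.+1 (x k.+1) <= Jk Q A q v m k (x k.+1).
  by apply: (mono Q q pA m0 k1); apply: C.
have h2 : Jk Q A q v m k (x k.+1) <= Jk Q A q v m k (x k).
  rewrite step //; apply: (desc pQ pA m0) => //; first exact: C.
  by rewrite -step //; apply: C.
by split => //; apply: le_trans h1 h2.
Qed.
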